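(* In the setting of the context (FSR scheme with direct flux reconstruction), let $\mathcal{E}_j=(\Phi_{j+1/2}-\Phi_{j-1/2})/h$ evaluated on exact nodal values. If $\kappa_3=\kappa-1$, then for arbitrary $\theta,\theta_3$, as $h\to0$ with derivatives at $x_j$, $$\mathcal{E}_j=\frac{\partial f}{\partial x}+\frac{3\theta-1}{12}\frac{\partial^3 f}{\partial x^3}h^2+\frac{15(\theta-\theta_3)-13}{240}\frac{\partial^5 f}{\partial x^5}h^4+\frac{\kappa-1}{32}\left[\frac{\partial D}{\partial x}\frac{\partial^5 u}{\partial x^5}+D(u(x_j))\frac{\partial^6 u}{\partial x^6}\right]h^5+O(h^6),$$ where $f$ denotes $f(u(x))$ and $\partial D/\partial x=\frac{d}{dx}D(u(x))$. In particular, with $\theta=1/3$ and $\theta_3=-8/15$ the scheme is fifth-order accurate, and sixth-order accurate if $D\equiv0$.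
   Context: Let $h>0$, uniform grid $x_i=ih$, $i\in\mathbb{Z}$. Let $u$ be a smooth real function of $x$, $u_i=u(x_i)$; let $f$ (flux) and $D$ (dissipation coefficient) be smooth real functions of one variable; $f_i=f(u_i)$. For nodal values $g_i$ define successive central differences $(g_x)_i=(g_{i+1}-g_{i-1})/(2h)$, $(g_{xx})_i=((g_x)_{i+1}-(g_x)_{i-1})/(2h)$, and for the face $i+1/2$ with $j=i$, $k=i+1$, define $T_j[g]=\frac h4((g_x)_k-(g_x)_j)-\frac{h^2}{4}(g_{xx})_j$, $T_k[g]=\frac h4((g_x)_k-(g_x)_j)-\frac{h^2}{4}(g_{xx})_k$. Reconstructed solution states (parameters $\kappa,\kappa_3$): $u_L=\kappa\frac{u_j+u_k}{2}+(1-\kappa)[u_j+\frac h2(u_x)_j]+\kappa_3T_j[u]$, $u_R=\kappa\frac{u_j+u_k}{2}+(1-\kappa)[u_k-\frac h2(u_x)_k]+\kappa_3T_k[u]$. Reconstructed fluxes (parameters $\theta,\theta_3$): $f_L=\theta\frac{f_j+f_k}{2}+(1-\theta)[f_j+\frac h2(f_x)_j]+\theta_3T_j[f]$, $f_R=\theta\frac{f_j+f_k}{2}+(1-\theta)[f_k-\frac h2(f_x)_k]+\theta_3T_k[f]$. Numerical flux: $\Phi_{i+1/2}=\frac12(f_L+f_R)-\frac12D_{i+1/2}(u_R-u_L)$, with $D_{i+1/2}=\bar D(u_i,u_{i+1})$ for a smooth symmetric $\bar D$ with $\bar D(v,v)=D(v)$. *)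

(* Defs.v *)
From Stdlib Require Import Reals ZArith.
From Coquelicot Require Import Coquelicot.
Open Scope R_scope.

Definition smooth1 (g : R -> R) : Prop :=
  forall (n : nat) (x : R), ex_derive_n g n x.

Definition pderiv2 (F : R -> R -> R) (n m : nat) (x y : R) : R :=
  Derive_n (fun s => Derive_n (fun t => F s t) m y) n x.

Definition smooth2 (F : R -> R -> R) : Prop :=
  forall (n m : nat) (x y : R),
    ex_derive_n (fun t => F x t) m y /\
    ex_derive_n (fun s => Derive_n (fun t => F s t) m y) n x /\
    continuous (fun p : R * R => pderiv2 F n m (fst p) (snd p)) (x, y).

Definition cdx (h : R) (g : Z -> R) (i : Z) : R :=
  (g (i + 1)%Z - g (i - 1)%Z) / (2 * h).

Definition cdxx (h : R) (g : Z -> R) (i : Z) : R :=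
  (cdx h g (i + 1)%Z - cdx h g (i - 1)%Z) / (2 * h).

(** Face i+1/2, with j = i and k = i+1. *)
Definition Tj (h : R) (g : Z -> R) (i : Z) : R :=
  h / 4 * (cdx h g (i + 1)%Z - cdx h g i) - h ^ 2 / 4 * cdxx h g i.

Definition Tk (h : R) (g : Z -> R) (i : Z) : R :=
  h / 4 * (cdx h g (i + 1)%Z - cdx h g i) - h ^ 2 / 4 * cdxx h g (i + 1)%Z.

(** Left / right reconstructions at face i+1/2 with parameters (a, a3)
    (a = kappa, a3 = kappa_3 for the solution; a = theta, a3 = theta_3
    for the flux). *)
Definition reconL (a a3 h : R) (g : Z -> R) (i : Z) : R :=
  a * ((g i + g (i + 1)%Z) / 2)
  + (1 - a) * (g i + h / 2 * cdx h g i)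
  + a3 * Tj h g i.

Definition reconR (a a3 h : R) (g : Z -> R) (i : Z) : R :=
  a * ((g i + g (i + 1)%Z) / 2)
  + (1 - a) * (g (i + 1)%Z - h / 2 * cdx h g (i + 1)%Z)
  + a3 * Tk h g i.

(** Numerical flux Phi_{i+1/2} for nodal solution values ug. *)
Definition numflux (f : R -> R) (Dbar : R -> R -> R)
    (kappa kappa3 theta theta3 h : R) (ug : Z -> R) (i : Z) : R :=
  let fg := fun m => f (ug m) in
  (reconL theta theta3 h fg i + reconR theta theta3 h fg i) / 2
  - Dbar (ug i) (ug (i + 1)%Z) / 2
    * (reconR kappa kappa3 h ug i - reconL kappa kappa3 h ug i).

(** Exact nodal values of u on the grid of spacing h whose node of
    index 0 is the point x (i.e. x_j = x with j = 0, x_i = x + i h). *)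
Definition nodal (u : R -> R) (x h : R) : Z -> R :=
  fun m => u (x + IZR m * h).

Definition residual (u f : R -> R) (Dbar : R -> R -> R)
    (kappa kappa3 theta theta3 x h : R) : R :=
  (numflux f Dbar kappa kappa3 theta theta3 h (nodal u x h) 0%Z
   - numflux f Dbar kappa kappa3 theta theta3 h (nodal u x h) (-1)%Z) / h.

Definition bigO_h (e : R -> R) (p : nat) : Prop :=
  exists C delta : R, 0 < delta /\
    forall h : R, 0 < h < delta -> Rabs (e h) <= C * h ^ p.

(* Main.v *)
Require Import Defs.
From Stdlib Require Import Reals ZArith Lra Lia.
From Coquelicot Require Import Coquelicot.
Open Scope R_scope.

Lemma O_ext e1 e2 p : (forall h, 0 < h -> e1 h = e2 h) -> bigO_h e2 p -> bigO_h e1 p.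
Proof.
  intros E [C [d [Hd H]]]. exists C, d. split; auto.
  intros h Hh. rewrite E by lra. apply H; auto.
Qed.

Lemma O_abs e p : bigO_h e p -> exists C d, 0 <= C /\ 0 < d /\ forall h, 0 < h < d -> Rabs (e h) <= C * h ^ p.
Proof.
  intros [C [d [Hd H]]]. exists (Rabs C), d. split; [apply Rabs_pos|split; auto].
  intros h Hh. eapply Rle_trans; [apply H; auto|].
  apply Rmult_le_compat_r; [apply pow_le; lra| apply RRle_abs].
Qed.

Lemma O_plus e1 e2 p : bigO_h e1 p -> bigO_h e2 p -> bigO_h (fun h => e1 h + e2 h) p.
Proof.
  intros H1 H2. apply O_abs in H1 as [C1 [d1 [HC1 [Hd1 H1]]]].
  apply O_abs in H2 as [C2 [d2 [HC2 [Hd2 H2]]]].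
  exists (C1 + C2), (Rmin d1 d2). split; [apply Rmin_pos; auto|].
  intros h Hh. assert (h < d1) by (eapply Rlt_le_trans; [apply Hh|apply Rmin_l]).
  assert (h < d2) by (eapply Rlt_le_trans; [apply Hh|apply Rmin_r]).
  eapply Rle_trans; [apply Rabs_triang|].
  specialize (H1 h (conj (proj1 Hh) H)). specialize (H2 h (conj (proj1 Hh) H0)). lra.
Qed.

Lemma O_scal c e p : bigO_h e p -> bigO_h (fun h => c * e h) p.
Proof.
  intros H. apply O_abs in H as [C [d [HC [Hd H]]]].
  exists (Rabs c * C), d. split; auto. intros h Hh.
  rewrite Rabs_mult, Rmult_assoc. apply Rmult_le_compat_l; [apply Rabs_pos|auto].
Qed.

Lemma O_opp e p : bigO_h e p -> bigO_h (fun h => - e h) p.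
Proof.
  intros H. apply O_ext with (fun h => (-1) * e h). intros; ring. apply O_scal; auto.
Qed.

Lemma O_minus e1 e2 p : bigO_h e1 p -> bigO_h e2 p -> bigO_h (fun h => e1 h - e2 h) p.
Proof.
  intros H1 H2. apply O_ext with (fun h => e1 h + - e2 h). intros; ring.
  apply O_plus; auto. apply O_opp; auto.
Qed.

Lemma O_mult e1 e2 p q : bigO_h e1 p -> bigO_h e2 q -> bigO_h (fun h => e1 h * e2 h) (p + q).
Proof.
  intros H1 H2. apply O_abs in H1 as [C1 [d1 [HC1 [Hd1 H1]]]].
  apply O_abs in H2 as [C2 [d2 [HC2 [Hd2 H2]]]].
  exists (C1 * C2), (Rmin d1 d2). split; [apply Rmin_pos; auto|].
  intros h Hh. assert (h < d1) by (eapply Rlt_le_trans; [apply Hh|apply Rmin_l]).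
  assert (h < d2) by (eapply Rlt_le_trans; [apply Hh|apply Rmin_r]).
  specialize (H1 h (conj (proj1 Hh) H)). specialize (H2 h (conj (proj1 Hh) H0)).
  rewrite Rabs_mult, pow_add.
  replace (C1 * C2 * (h ^ p * h ^ q)) with ((C1 * h^p) * (C2 * h^q)) by ring.
  apply Rmult_le_compat; auto; apply Rabs_pos.
Qed.

Lemma O_const c : bigO_h (fun _ => c) 0.
Proof. exists (Rabs c), 1. split; [lra|]. intros; simpl; lra. Qed.

Lemma O_pow k : bigO_h (fun h => h ^ k) k.
Proof. exists 1, 1. split; [lra|]. intros h Hh. rewrite Rabs_right. lra.
  apply Rle_ge, pow_le; lra. Qed.

Lemma pow_le1 h k : 0 <= h <= 1 -> h ^ k <= 1.
Proof.
  intros Hh. induction k; simpl; [lra|].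
  assert (0 <= h ^ k) by (apply pow_le; lra).
  replace 1 with (1 * 1) by ring. apply Rmult_le_compat; lra.
Qed.

Lemma O_weak e p q : (q <= p)%nat -> bigO_h e p -> bigO_h e q.
Proof.
  intros Hqp H. apply O_abs in H as [C [d [HC [Hd H]]]].
  exists C, (Rmin d 1). split; [apply Rmin_pos; lra|].
  intros h Hh. assert (h < d) by (eapply Rlt_le_trans; [apply Hh|apply Rmin_l]).
  assert (h < 1) by (eapply Rlt_le_trans; [apply Hh|apply Rmin_r]).
  eapply Rle_trans; [apply H; lra|]. apply Rmult_le_compat_l; auto.
  replace p with (q + (p - q))%nat by lia. rewrite pow_add.
  rewrite <- (Rmult_1_r (h ^ q)) at 2. apply Rmult_le_compat_l. apply pow_le; lra.
  apply pow_le1; lra.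
Qed.

Lemma O_divh e p : bigO_h e (S p) -> bigO_h (fun h => e h / h) p.
Proof.
  intros H. apply O_abs in H as [C [d [HC [Hd H]]]].
  exists C, d. split; auto. intros h Hh.
  unfold Rdiv. rewrite Rabs_mult, Rabs_inv, (Rabs_right h) by lra.
  apply Rmult_le_reg_r with h; [lra|].
  rewrite Rmult_assoc, Rinv_l by lra. rewrite Rmult_1_r.
  eapply Rle_trans; [apply H; auto|]. simpl. lra.
Qed.

Definition Ck (n : nat) (g : R -> R) : Prop :=
  forall x k, (k <= n)%nat -> ex_derive_n g k x.

Lemma Derive_n_S_comm g k x : Derive_n (Derive g) k x = Derive_n g (S k) x.
Proof.
  revert x. induction k; intros x; simpl; [reflexivity|].
  apply Derive_ext. intros t. apply IHk.
Qed.

Lemma Ck_ext n f g : (forall t, f t = g t) -> Ck n f -> Ck n g.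
Proof. intros E H x k Hk. eapply ex_derive_n_ext; [apply E|]. apply H; auto. Qed.

Lemma Ck_mono n m g : (m <= n)%nat -> Ck n g -> Ck m g.
Proof. intros Hm H x k Hk. apply H. lia. Qed.

Lemma Ck_S n g : Ck (S n) g -> (forall x, ex_derive g x) /\ Ck n (Derive g).
Proof.
  intros H. split.
  - intros x. apply (H x 1%nat). lia.
  - intros x k Hk. destruct k; [exact I|]. simpl.
    eapply ex_derive_ext; [intros t; symmetry; apply Derive_n_S_comm|].
    apply (H x (S (S k))). lia.
Qed.

Lemma Ck_S_inv n g : (forall x, ex_derive g x) -> Ck n (Derive g) -> Ck (S n) g.
Proof.
  intros H1 H2 x k Hk. destruct k; [exact I|]. destruct k; [apply H1|].
  simpl. eapply ex_derive_ext; [intros t; apply Derive_n_S_comm|].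
  apply (H2 x (S k)). lia.
Qed.

Lemma Ck_plus n a b : Ck n a -> Ck n b -> Ck n (fun t => a t + b t).
Proof.
  intros Ha Hb x k Hk. apply ex_derive_n_plus.
  - apply filter_forall. intros y j Hj. apply Ha. lia.
  - apply filter_forall. intros y j Hj. apply Hb. lia.
Qed.

Lemma Ck_mult n : forall a b, Ck n a -> Ck n b -> Ck n (fun t => a t * b t).
Proof.
  induction n; intros a b Ha Hb.
  - intros x k Hk. replace k with 0%nat by lia. exact I.
  - apply Ck_S in Ha as Ha'. destruct Ha' as [Ha1 Ha2].
    apply Ck_S in Hb as Hb'. destruct Hb' as [Hb1 Hb2].
    apply Ck_S_inv.
    + intros x. apply ex_derive_mult; auto.
    + apply Ck_ext with (fun t => Derive a t * b t + a t * Derive b t).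
      { intros t. rewrite Derive_mult; auto. }
      apply Ck_plus; apply IHn; auto; eapply Ck_mono; try apply Ha; try apply Hb; lia.
Qed.

Lemma Ck_comp n : forall f u, Ck n f -> Ck n u -> Ck n (fun t => f (u t)).
Proof.
  induction n; intros f u Hf Hu.
  - intros x k Hk. replace k with 0%nat by lia. exact I.
  - apply Ck_S in Hf as Hf'. destruct Hf' as [Hf1 Hf2].
    apply Ck_S in Hu as Hu'. destruct Hu' as [Hu1 Hu2].
    apply Ck_S_inv.
    + intros x. apply ex_derive_comp; auto.
    + apply Ck_ext with (fun t => Derive u t * Derive f (u t)).
      { intros t. symmetry. apply Derive_comp; [apply Hf1|apply Hu1]. }
      apply Ck_mult; auto. apply IHn; auto. eapply Ck_mono; [|apply Hu]. lia.
Qed.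

Lemma smooth_Ck g : smooth1 g -> forall n, Ck n g.
Proof. intros H n x k _. apply H. Qed.

Lemma Ck_smooth g : (forall n, Ck n g) -> smooth1 g.
Proof. intros H n x. apply (H n). lia. Qed.

Lemma smooth_comp f u : smooth1 f -> smooth1 u -> smooth1 (fun t => f (u t)).
Proof.
  intros Hf Hu. apply Ck_smooth. intros n. apply Ck_comp; apply smooth_Ck; auto.
Qed.

Lemma fact_ge1 k : 1 <= INR (fact k).
Proof. replace 1 with (INR 1) by reflexivity. apply le_INR. pose proof (lt_O_fact k). lia. Qed.

Lemma sum0 (d : nat -> R) n : sum_f_R0 (fun m => 0 ^ m / INR (fact m) * d m) n = d 0%nat.
Proof.
  induction n. simpl; field.
  change (sum_f_R0 ?f (S n)) with (sum_f_R0 f n + f (S n)). rewrite IHn. cbv beta.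
  rewrite pow_i by lia. unfold Rdiv. ring.
Qed.

Lemma rem_bound t n F M : Rabs F <= M ->
  Rabs (t ^ n / INR (fact n) * F) <= Rabs t ^ n * M.
Proof.
  intros HF. pose proof (fact_ge1 n).
  unfold Rdiv. rewrite !Rabs_mult, Rabs_inv, <- RPow_abs, (Rabs_right (INR _)) by lra.
  assert (0 <= Rabs t ^ n) by (apply pow_le; apply Rabs_pos).
  assert (0 < / INR (fact n) <= 1).
  { split. apply Rinv_0_lt_compat; lra. rewrite <- Rinv_1. apply Rinv_le_contravar; lra. }
  assert (0 <= Rabs F) by apply Rabs_pos.
  replace (Rabs t ^ n * M) with (Rabs t ^ n * 1 * M) by ring.
  apply Rmult_le_compat; try nra.
Qed.

Lemma taylorO G n c x : smooth1 G ->
  bigO_h (fun h => G (x + c * h)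
     - sum_f_R0 (fun m => (c * h) ^ m / INR (fact m) * Derive_n G m x) n) (S n).
Proof.
  intros HG.
  set (F := Derive_n G (S n)).
  assert (Fc : forall y, continuity_pt (fun z => Rabs (F z)) y).
  { intros y. apply (continuity_pt_comp F Rabs). apply derivable_continuous_pt.
    apply ex_derive_Reals_0. apply (HG (S (S n)) y). apply Rcontinuity_abs. }
  destruct (continuity_ab_maj (fun z => Rabs (F z)) (x - 1) (x + 1)) as [Mx [HM _]].
  lra. intros; apply Fc.
  set (M := Rabs (F Mx)).
  assert (HM0 : 0 <= M) by apply Rabs_pos.
  exists (M * Rabs c ^ S n), (/ (Rabs c + 1)).
  assert (Hc0 : 0 <= Rabs c) by apply Rabs_pos.
  split. apply Rinv_0_lt_compat; lra.
  intros h [Hh0 Hh1].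
  assert (Ht : Rabs (c * h) < 1).
  { rewrite Rabs_mult, (Rabs_right h) by lra.
    apply Rmult_lt_compat_r with (r := Rabs c + 1) in Hh1; [|lra].
    rewrite Rinv_l in Hh1 by lra. nra. }
  replace (M * Rabs c ^ S n * h ^ S n) with (Rabs (c * h) ^ S n * M).
  2:{ rewrite Rabs_mult, (Rabs_right h) by lra. rewrite Rpow_mult_distr. ring. }
  set (t := c * h) in *.
  assert (Hab : forall a b, a + b - a = b) by (intros; ring).
  destruct (total_order_T t 0) as [[Hlt|Heq]|Hgt].
  -
    set (H := fun s => G (- s)).
    assert (HH : forall s k, ex_derive_n H k s).
    { intros s k. apply ex_derive_n_comp_opp. apply filter_forall. intros; apply HG. }
    destruct (Taylor_Lagrange H n (- x) (- x - t)) as [z [Hz1 Hz2]]. lra.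
    intros; apply HH.
    unfold H at 1 in Hz2. replace (- (- x - t)) with (x + t) in Hz2 by ring.
    rewrite Hz2.
    assert (Hs : sum_f_R0 (fun m => (- x - t - - x) ^ m / INR (fact m) * Derive_n H m (- x)) n
               = sum_f_R0 (fun m => t ^ m / INR (fact m) * Derive_n G m x) n).
    { apply sum_eq. intros i _. unfold H. rewrite Derive_n_comp_opp.
      2:{ apply filter_forall. intros; apply HG. }
      replace (- - x) with x by ring. replace (- x - t - - x) with ((-1) * t) by ring.
      rewrite Rpow_mult_distr.
      pose proof (fact_ge1 i).
      replace ((-1) ^ i * t ^ i / INR (fact i) * ((-1) ^ i * Derive_n G i x))
        with (((-1) * (-1)) ^ i * (t ^ i / INR (fact i) * Derive_n G i x))
        by (rewrite Rpow_mult_distr; field; lra).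
      replace ((-1) * (-1)) with 1 by ring. rewrite pow1. ring. }
    rewrite Hs. rewrite Hab.
    replace (- x - t - - x) with (- t) by ring.
    replace (Rabs t) with (Rabs (- t)) by apply Rabs_Ropp.
    apply rem_bound. unfold H. rewrite Derive_n_comp_opp.
    2:{ apply filter_forall. intros; apply HG. }
    rewrite Rabs_mult, pow_1_abs, Rmult_1_l. apply HM.
    apply Rabs_def2 in Ht. lra.
  - rewrite Heq. rewrite Rplus_0_r, sum0. change (Derive_n G 0 x) with (G x).
    rewrite Rminus_diag, Rabs_R0. apply Rmult_le_pos; auto. apply pow_le; lra.
  - destruct (Taylor_Lagrange G n x (x + t)) as [z [Hz1 Hz2]]. lra.
    intros; apply HG.
    replace (x + t - x) with t in Hz2 by ring. rewrite Hz2, Hab.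
    apply rem_bound. apply HM. apply Rabs_def2 in Ht. lra.
Qed.

Lemma mvt_arg a b c : Rmin a b <= c <= Rmax a b -> Rabs (c - a) <= Rabs (b - a).
Proof.
  unfold Rmin, Rmax. destruct (Rle_dec a b); intros; unfold Rabs;
  repeat destruct Rcase_abs; lra.
Qed.

Lemma diag_deriv (Dbar : R -> R -> R) (D : R -> R) a :
  smooth2 Dbar -> (forall p q, Dbar p q = Dbar q p) -> (forall v, Dbar v v = D v) ->
  is_derive D a (2 * Derive (fun t => Dbar a t) a).
Proof.
  intros HS Hsym Hdiag.
  set (Fd := fun s t => Derive (fun t' => Dbar s t') t).
  assert (Hcont : continuity_2d_pt Fd a a).
  { apply continuity_2d_pt_filterlim. destruct (HS 0%nat 1%nat a a) as [_ [_ H3]].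
    exact H3. }
  assert (Hex : forall s t, ex_derive (fun t' => Dbar s t') t).
  { intros s t. destruct (HS 0%nat 1%nat s t) as [H1 _]. exact H1. }
  assert (Hmvt : forall s h, exists c, Rabs (c - a) <= Rabs h /\
            Dbar s (a + h) - Dbar s a = Fd s c * h).
  { intros s h.
    destruct (MVT_gen (fun t => Dbar s t) a (a + h) (Fd s)) as [c [Hc Hc2]].
    - intros y _. apply Derive_correct. apply Hex.
    - intros y _. apply derivable_continuous_pt. apply ex_derive_Reals_0. apply Hex.
    - exists c. split. { assert (HH := mvt_arg _ _ _ Hc). replace (a + h - a) with h in HH by ring. exact HH. }
      rewrite Hc2. f_equal. ring. }
  apply is_derive_Reals. intros eps Heps.
  assert (He2 : 0 < eps / 2) by lra.
  destruct (Hcont (mkposreal _ He2)) as [d Hd]. simpl in Hd.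
  exists d. intros h Hh0 Hhd.
  destruct (Hmvt (a + h) h) as [c1 [Hc1 E1]].
  destruct (Hmvt a h) as [c2 [Hc2 E2]].
  assert (E : D (a + h) - D a = h * (Fd (a + h) c1 + Fd a c2)).
  { rewrite <- !Hdiag. rewrite (Hsym (a + h) a) in E1. lra. }
  rewrite E. replace (h * (Fd (a + h) c1 + Fd a c2) / h) with (Fd (a + h) c1 + Fd a c2)
    by (field; auto).
  assert (A1 : Rabs (Fd (a + h) c1 - Fd a a) < eps / 2).
  { apply Hd. replace (a + h - a) with h by ring. auto. lra. }
  assert (A2 : Rabs (Fd a c2 - Fd a a) < eps / 2).
  { apply Hd. rewrite Rminus_diag, Rabs_R0. apply cond_pos. lra. }
  change (Derive (fun t => Dbar a t) a) with (Fd a a).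
  revert A1 A2. unfold Rabs. repeat destruct Rcase_abs; lra.
Qed.
Definition T6 (d : nat -> R) (t : R) : R :=
  d 0%nat + t * d 1%nat + t^2/2 * d 2%nat + t^3/6 * d 3%nat + t^4/24 * d 4%nat
  + t^5/120 * d 5%nat + t^6/720 * d 6%nat.
Lemma sum6 (d : nat -> R) t : sum_f_R0 (fun m => t ^ m / INR (fact m) * d m) 6 = T6 d t.
Proof.
  unfold T6. cbn [sum_f_R0]. rewrite !INR_IZR_INZ. simpl Z.of_nat. field.
Qed.
Lemma sum1 (d : nat -> R) t : sum_f_R0 (fun m => t ^ m / INR (fact m) * d m) 1 = d 0%nat + t * d 1%nat.
Proof.
  cbn [sum_f_R0]. rewrite !INR_IZR_INZ. simpl Z.of_nat. field.
Qed.

Definition Eerr (u f : R -> R) (Dbar : R -> R -> R) (kappa theta theta3 x : R)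
  (dg du : nat -> R) (p0 Dp : R) (h : R) : R :=
  let ug := nodal u x h in
  let eg := fun (m : Z) (c : R) => f (ug m) - T6 dg (c * h) in
  let eu := fun (m : Z) (c : R) => ug m - T6 du (c * h) in
  let P := Dbar (ug 0%Z) (ug 1%Z) in
  let Q := Dbar (ug 0%Z) (ug (-1)%Z) in
  let rp := P - p0 - h * (Dp / 2) in
  let rm := Q - p0 + h * (Dp / 2) in
  let J0p := (1 - kappa) / 16 * (du 5%nat * h^5 + du 6%nat * h^6 / 2) in
  let J1p := (1 - kappa) / 16 * (du 5%nat * h^5 - du 6%nat * h^6 / 2) in
  theta3/32 * eg (-3)%Z (-3) + (1/8 - theta/8 - theta3/8) * eg (-2)%Z (-2)
  + (-3/4 + theta/4 + 5*theta3/32) * eg (-1)%Z (-1)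
  - (-3/4 + theta/4 + 5*theta3/32) * eg 1%Z 1
  - (1/8 - theta/8 - theta3/8) * eg 2%Z 2 - theta3/32 * eg 3%Z 3
  - 1/2 * ((1 - kappa)/16) *
     (P * (- eu (-2)%Z (-2) + 5 * eu (-1)%Z (-1) - 10 * eu 0%Z 0 + 10 * eu 1%Z 1
           - 5 * eu 2%Z 2 + eu 3%Z 3)
    - Q * (- eu (-3)%Z (-3) + 5 * eu (-2)%Z (-2) - 10 * eu (-1)%Z (-1) + 10 * eu 0%Z 0
           - 5 * eu 1%Z 1 + eu 2%Z 2))
  - 1/2 * (rp * J0p - rm * J1p).

Lemma alg u f Dbar kappa theta theta3 x h dg du p0 Dp
  (Hh : h <> 0)
  (Hs : Dbar (nodal u x h (-1)%Z) (nodal u x h 0%Z) = Dbar (nodal u x h 0%Z) (nodal u x h (-1)%Z)) :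
  residual u f Dbar kappa (kappa - 1) theta theta3 x h
  - ( dg 1%nat
      + (3 * theta - 1) / 12 * dg 3%nat * h ^ 2
      + (15 * (theta - theta3) - 13) / 240 * dg 5%nat * h ^ 4
      + (kappa - 1) / 32 * (Dp * du 5%nat + p0 * du 6%nat) * h ^ 5)
  = Eerr u f Dbar kappa theta theta3 x dg du p0 Dp h / h.
Proof.
  unfold residual, numflux, reconL, reconR, Tj, Tk, cdxx, cdx, Eerr.
  simpl Z.add. simpl Z.sub. rewrite Hs.
  unfold T6. field. exact Hh.
Qed.

Lemma taylor6 G c x : smooth1 G ->
  bigO_h (fun h => G (x + c * h) - T6 (fun k => Derive_n G k x) (c * h)) 7.
Proof.
  intros HG. eapply O_ext; [|apply (taylorO G 6 c x HG)].
  intros h _. cbv beta. rewrite sum6. reflexivity.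
Qed.

Lemma taylor1 G c x : smooth1 G ->
  bigO_h (fun h => G (x + c * h) - (G x + c * h * Derive G x)) 2.
Proof.
  intros HG. eapply O_ext; [|apply (taylorO G 1 c x HG)].
  intros h _. cbv beta. rewrite sum1. reflexivity.
Qed.

Lemma O_poly56 a b : bigO_h (fun h => a * h ^ 5 + b * h ^ 6) 5.
Proof.
  apply O_plus. apply O_scal, O_pow. apply O_scal. apply (O_weak _ 6). lia. apply O_pow.
Qed.

Lemma O_bounded1 G x c : smooth1 G -> bigO_h (fun h => G (x + c * h)) 0.
Proof.
  intros HG. eapply O_ext with (fun h => (G (x + c * h) - (G x + c * h * Derive G x))
     + (G x + (c * Derive G x) * h ^ 1)).
  { intros; simpl; ring. }
  apply O_plus. apply (O_weak _ 2). lia. apply taylor1; auto.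
  apply O_plus. apply O_const. apply O_scal. apply (O_weak _ 1). lia. apply O_pow.
Qed.

Ltac Otac f u :=
  first
  [ apply (taylor6 (fun y => f (u y))); assumption
  | apply (taylor6 u); assumption
  | apply O_plus; [Otac f u|Otac f u]
  | apply O_minus; [Otac f u|Otac f u]
  | apply O_opp; Otac f u
  | apply O_scal; Otac f u ].

Theorem part1
  (u f D : R -> R) (Dbar : R -> R -> R) (kappa : R)
  (Hu : smooth1 u) (Hf : smooth1 f) (HD : smooth1 D)
  (HDbar : smooth2 Dbar)
  (Hsym : forall a b, Dbar a b = Dbar b a)
  (Hdiag : forall v, Dbar v v = D v) theta theta3 x :
     bigO_h (fun h =>
       residual u f Dbar kappa (kappa - 1) theta theta3 x h
       - ( Derive_n (fun y => f (u y)) 1 x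
         + (3 * theta - 1) / 12 * Derive_n (fun y => f (u y)) 3 x * h ^ 2
         + (15 * (theta - theta3) - 13) / 240
             * Derive_n (fun y => f (u y)) 5 x * h ^ 4
         + (kappa - 1) / 32
             * (Derive (fun y => D (u y)) x * Derive_n u 5 x
                + D (u x) * Derive_n u 6 x) * h ^ 5)) 6.
Proof.
  assert (Hg : smooth1 (fun y => f (u y))) by (apply smooth_comp; auto).
  assert (Hphi : smooth1 (fun t => Dbar (u x) t)).
  { intros n y. destruct (HDbar 0%nat n (u x) y) as [H1 _]. exact H1. }
  assert (Hpsi : smooth1 (fun y => Dbar (u x) (u y))).
  { apply (smooth_comp (fun t => Dbar (u x) t)); auto. }
  assert (Hder : Derive (fun y => Dbar (u x) (u y)) x = Derive (fun y => D (u y)) x / 2).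
  { pose proof (diag_deriv Dbar D (u x) HDbar Hsym Hdiag) as Hdd.
    rewrite (Derive_comp (fun t => Dbar (u x) t) u x).
    2: apply (Hphi 1%nat). 2: apply (Hu 1%nat).
    rewrite (Derive_comp D u x).
    2: eexists; exact Hdd. 2: apply (Hu 1%nat).
    rewrite (is_derive_unique _ _ _ Hdd). field. }
  eapply O_ext.
  { intros h Hh.
    exact (alg u f Dbar kappa theta theta3 x h (fun k => Derive_n (fun y => f (u y)) k x)
             (fun k => Derive_n u k x) (D (u x)) (Derive (fun y => D (u y)) x)
             ltac:(lra) (Hsym _ _)). }
  apply O_divh.
  unfold Eerr. cbv beta zeta.
  assert (E0 : forall h, nodal u x h 0%Z = u x).
  { intros h. unfold nodal. rewrite Rmult_0_l, Rplus_0_r. reflexivity. }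
  apply O_minus; [apply O_minus|].
  - Otac f u.
  - apply O_scal. apply O_minus; apply (O_mult _ _ 0 7).
    + apply O_ext with (fun h => Dbar (u x) (u (x + 1 * h))).
      { intros h _. rewrite E0. reflexivity. }
      apply (O_bounded1 (fun y => Dbar (u x) (u y))); auto.
    + Otac f u.
    + apply O_ext with (fun h => Dbar (u x) (u (x + -1 * h))).
      { intros h _. rewrite E0. reflexivity. }
      apply (O_bounded1 (fun y => Dbar (u x) (u y))); auto.
    + Otac f u.
  - apply O_scal. apply O_minus; apply (O_mult _ _ 2 5).
    + apply O_ext with (fun h => Dbar (u x) (u (x + 1 * h))
          - (Dbar (u x) (u x) + 1 * h * Derive (fun y => Dbar (u x) (u y)) x)).
      { intros h _. rewrite E0, Hder, Hdiag. reflexivity || (unfold nodal; ring). }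
      apply (taylor1 (fun y => Dbar (u x) (u y))); auto.
    + apply O_ext with (fun h => ((1 - kappa) / 16 * Derive_n u 5 x) * h ^ 5
          + ((1 - kappa) / 32 * Derive_n u 6 x) * h ^ 6); [intros h _; field|apply O_poly56].
    + apply O_ext with (fun h => Dbar (u x) (u (x + -1 * h))
          - (Dbar (u x) (u x) + -1 * h * Derive (fun y => Dbar (u x) (u y)) x)).
      { intros h _. rewrite E0, Hder, Hdiag. reflexivity || (unfold nodal; ring). }
      apply (taylor1 (fun y => Dbar (u x) (u y))); auto.
    + apply O_ext with (fun h => ((1 - kappa) / 16 * Derive_n u 5 x) * h ^ 5
          + (- ((1 - kappa) / 32 * Derive_n u 6 x)) * h ^ 6); [intros h _; field|apply O_poly56].
Qed.

Theorem mainTheorem4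
  (u f D : R -> R) (Dbar : R -> R -> R) (kappa kappa3 : R)
  (Hu : smooth1 u) (Hf : smooth1 f) (HD : smooth1 D)
  (HDbar : smooth2 Dbar)
  (Hsym : forall a b, Dbar a b = Dbar b a)
  (Hdiag : forall v, Dbar v v = D v)
  (Hk3 : kappa3 = kappa - 1) :
  (forall (theta theta3 x : R),
     bigO_h (fun h =>
       residual u f Dbar kappa kappa3 theta theta3 x h
       - ( Derive_n (fun y => f (u y)) 1 x
         + (3 * theta - 1) / 12 * Derive_n (fun y => f (u y)) 3 x * h ^ 2
         + (15 * (theta - theta3) - 13) / 240
             * Derive_n (fun y => f (u y)) 5 x * h ^ 4
         + (kappa - 1) / 32
             * (Derive (fun y => D (u y)) x * Derive_n u 5 x
                + D (u x) * Derive_n u 6 x) * h ^ 5)) 6)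
  /\
  (forall x : R,
     bigO_h (fun h =>
       residual u f Dbar kappa kappa3 (1 / 3) (- (8 / 15)) x h
       - Derive_n (fun y => f (u y)) 1 x) 5)
  /\
  ((forall v, D v = 0) ->
   forall x : R,
     bigO_h (fun h =>
       residual u f Dbar kappa kappa3 (1 / 3) (- (8 / 15)) x h
       - Derive_n (fun y => f (u y)) 1 x) 6).
Proof.
  subst kappa3.
  pose proof (part1 u f D Dbar kappa Hu Hf HD HDbar Hsym Hdiag) as P1.
  split; [exact P1|split].
  - intros x.
    set (K := (kappa - 1) / 32 * (Derive (fun y => D (u y)) x * Derive_n u 5 x
                + D (u x) * Derive_n u 6 x)).
    eapply O_ext; [|apply O_plus; [apply (O_weak _ 6); [lia|apply (P1 (1/3) (-(8/15)) x)]
                                  |apply (O_scal K); apply O_pow]].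
    intros h _. cbv beta. unfold K. field.
  - intros HD0 x.
    assert (Z1 : Derive (fun y => D (u y)) x = 0).
    { rewrite (Derive_ext _ (fun _ => 0)) by (intros; apply HD0). apply Derive_const. }
    eapply O_ext; [|apply (P1 (1/3) (-(8/15)) x)].
    intros h _. cbv beta. rewrite Z1, HD0. field.
Qed.
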